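(* Let $A^l\in\mathfrak{so}(q_l)^{p_l}$, $l=1,\dots,n$, be tuples with linearly independent components whose corresponding two-step nilpotent Lie algebras are indecomposable. Then the Lie algebra corresponding to the iterated adjoin $C=(\cdots((A^1+_aA^2)+_aA^3)\cdots)+_aA^n$ is indecomposable. Likewise, the Lie algebra corresponding to $A^1+_a\{A^2,\dots,A^n\}$ is indecomposable.
   Context: Adjoin of two tuples: for $A\in\mathfrak{so}(q_1)^{n_1}$ and $B\in\mathfrak{so}(q_2)^m$, $A+_aB\in\mathfrak{so}(q_1+q_2)^{n_1+m-1}$ has components $\mathrm{diag}(A_i,0)$ for $i<n_1$, $\mathrm{diag}(A_{n_1},B_1)$ for $i=n_1$, and $\mathrm{diag}(0,B_{i-n_1+1})$ for $n_1<i\le n_1+m-1$. Multiple adjoin: $A+_a\{D^1,\dots,D^m\}$ is block diagonal with respect to $\mathbb R^{q_0}\oplus\mathbb R^{q_1}\oplus\dots\oplus\mathbb R^{q_m}$. Its first $p_0-1$ components are $\mathrm{diag}(A_l,0,\dots,0)$. Its $p_0$-th component is $\mathrm{diag}(A_{p_0},D^1_1,\dots,D^m_1)$. Then follow $D^1_2,\dots,D^1_{p_1},D^2_2,\dots,D^m_{p_m}$, each in its own block with zeros elsewhere. For $C\in\mathfrak{so}(q)^p$ with linearly independent components, the corresponding Lie algebra on $\mathbb R^{q+p}$ has $[e_i,e_j]=\sum_k(C_k)_{ij}e_{q+k}$ for $i,j\le q$ and all other brackets zero. Indecomposable means not a direct sum of two nonzero ideals. *)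

(* Defs.v *)
(* The paper works over the reals; we state it over an
   arbitrary real field R : realFieldType (which includes the reals). *)
From HB Require Import structures.
From mathcomp Require Import all_boot all_order all_algebra.
Set Implicit Arguments. Unset Strict Implicit. Unset Printing Implicit Defensive.
Import Order.TTheory GRing.Theory Num.Theory.
Local Open Scope ring_scope.

Record tup (R : realFieldType) := Tup {
  tq : nat;
  tp : nat;
  tmx : 'I_tp -> 'M[R]_tq }.
Arguments Tup {R tq tp} tmx.
Arguments tq {R} t.
Arguments tp {R} t.
Arguments tmx {R} t _.

(* k-th component (0-based), or 0 if out of range *)
Definition tget (R : realFieldType) (T : tup R) (k : nat) : 'M[R]_(tq T) :=
  match (insub k : option 'I_(tp T)) with Some i => tmx T i | None => 0 end.

Definition skew_tup (R : realFieldType) (T : tup R) : Prop :=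
  forall i, (tmx T i)^T = - tmx T i.

Definition linindep_tup (R : realFieldType) (T : tup R) : bool :=
  row_free (\matrix_(i < tp T) mxvec (tmx T i)).

(* The Lie bracket on R^{q+p}: [e_i,e_j] = sum_k (C_k)_{ij} e_{q+k} for
   i,j <= q, other basis brackets zero, extended bilinearly. *)
Definition lie_br (R : realFieldType) (q p : nat) (C : 'I_p -> 'M[R]_q)
  (x y : 'rV[R]_(q + p)) : 'rV[R]_(q + p) :=
  row_mx 0 (\row_k ((lsubmx x *m C k *m (lsubmx y)^T) 0 0)).

Definition is_ideal (R : realFieldType) (q p : nat) (C : 'I_p -> 'M[R]_q)
  (I : 'M[R]_(q + p)) : Prop :=
  forall x y : 'rV[R]_(q + p), (y <= I)%MS -> (lie_br C x y <= I)%MS.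

(* direct sum of two nonzero ideals (subspaces given by row spaces) *)
Definition decomposable (R : realFieldType) (q p : nat) (C : 'I_p -> 'M[R]_q) : Prop :=
  exists I J : 'M[R]_(q + p),
    [/\ is_ideal C I /\ is_ideal C J, I != 0, J != 0,
        (I :&: J == (0 : 'M[R]_(q + p)))%MS & (I + J == 1%:M)%MS].

Definition indecomposable_tup (R : realFieldType) (T : tup R) : Prop :=
  ~ decomposable (tmx T).

(* Adjoin A +_a B of two tuples (as in the paper, requires tp A, tp B >= 1). *)
Definition adjoin (R : realFieldType) (A B : tup R) : tup R :=
  @Tup R (tq A + tq B) (tp A + tp B).-1 (fun i =>
    let k := val i in
    block_mx (if (k < tp A)%N then tget A k else 0) 0 0
             (if (tp A <= k.+1)%N then tget B (k.+1 - tp A) else 0)).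

(* Attaching D to T at the (0-based) component j: components k < tp T are
   diag(T_k, D_1 if k = j else 0); the remaining ones are diag(0, D_2),...,
   diag(0, D_{tp D}). *)
Definition attach_at (R : realFieldType) (j : nat) (T D : tup R) : tup R :=
  @Tup R (tq T + tq D) (tp T + tp D).-1 (fun i =>
    let k := val i in
    block_mx (if (k < tp T)%N then tget T k else 0) 0 0
             (if k == j then tget D 0
              else if (tp T <= k)%N then tget D (k.+1 - tp T) else 0)).

(* Multiple adjoin A +_a {D^1,...,D^m}: block diagonal w.r.t.
   R^{q0} + R^{q1} + ... + R^{qm}; first p0-1 components diag(A_l,0,..,0),
   the p0-th is diag(A_{p0}, D^1_1, ..., D^m_1), then D^1_2..D^1_{p1},
   D^2_2, ..., D^m_{pm}, each in its own block. *)
Definition multi_adjoin (R : realFieldType) (A : tup R) (Ds : seq (tup R)) : tup R :=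
  foldl (attach_at (tp A).-1) A Ds.

(* Main.v *)
Require Import Defs.
From HB Require Import structures.
From mathcomp Require Import all_boot all_order all_algebra.
From Stdlib Require List.
From Stdlib Require Import Lia FunctionalExtensionality.
Set Implicit Arguments. Unset Strict Implicit. Unset Printing Implicit Defensive.
Import Order.TTheory GRing.Theory Num.Theory.
Local Open Scope ring_scope.


Section S.
Variable R : realFieldType.

Definition beta (q p : nat) (C : 'I_p -> 'M[R]_q) (u v : 'rV[R]_q) : 'rV[R]_p :=
  \row_k (u *m C k *m v^T) 0 0.

Lemma lie_brE q p (C : 'I_p -> 'M[R]_q) x y :
  lie_br C x y = row_mx 0 (beta C (lsubmx x) (lsubmx y)).
Proof. by []. Qed.

Lemma betaDr q p (C : 'I_p -> 'M[R]_q) u v w :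
  beta C u (v + w) = beta C u v + beta C u w.
Proof.
apply/rowP => k; rewrite !mxE -big_split; apply: eq_bigr => j _.
by rewrite !mxE mulrDr.
Qed.

Lemma betaZr q p (C : 'I_p -> 'M[R]_q) u c v :
  beta C u (c *: v) = c *: beta C u v.
Proof.
apply/rowP => k; rewrite !mxE mulr_sumr; apply: eq_bigr => j _.
by rewrite !mxE mulrCA.
Qed.

Lemma beta0r q p (C : 'I_p -> 'M[R]_q) u : beta C u 0 = 0.
Proof. by apply/rowP => k; rewrite !mxE big1 // => j _; rewrite !mxE mulr0. Qed.

Lemma beta0l q p (C : 'I_p -> 'M[R]_q) v : beta C 0 v = 0.
Proof.
apply/rowP => k; rewrite !mxE big1 // => j _.
by rewrite !mxE big1 ?mul0r // => i _; rewrite mxE mul0r.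
Qed.

Lemma betaNr q p (C : 'I_p -> 'M[R]_q) u v : beta C u (- v) = - beta C u v.
Proof. by rewrite -scaleN1r betaZr scaleN1r. Qed.

Lemma betaBr q p (C : 'I_p -> 'M[R]_q) u v w :
  beta C u (v - w) = beta C u v - beta C u w.
Proof. by rewrite betaDr betaNr. Qed.

Lemma lie_brB q p (C : 'I_p -> 'M[R]_q) x y z :
  lie_br C x (y - z) = lie_br C x y - lie_br C x z.
Proof. by rewrite !lie_brE linearB /= betaBr opp_row_mx add_row_mx subr0. Qed.

Lemma lie_brD q p (C : 'I_p -> 'M[R]_q) x y z :
  lie_br C x (y + z) = lie_br C x y + lie_br C x z.
Proof. by rewrite !lie_brE linearD /= betaDr add_row_mx addr0. Qed.

Definition spans q p (C : 'I_p -> 'M[R]_q) :=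
  forall m (d : 'M[R]_(p, m)), (forall x y, beta C x y *m d = 0) -> d = 0.

Lemma e_entry n (A : 'M[R]_n) (i j : 'I_n) : (delta_mx (0:'I_1) i *m A *m (delta_mx (0:'I_1) j)^T) 0 0 = A i j.
Proof. by rewrite -rowE trmx_delta -colE !mxE. Qed.

Lemma linindep_spans (T : tup R) : linindep_tup T -> spans (tmx T).
Proof.
move=> hfree m d hd; apply/matrixP => k c; rewrite mxE.
set r : 'rV[R]_(tp T) := \row_k0 d k0 c.
have hS : \sum_k0 d k0 c *: tmx T k0 = 0.
  apply/matrixP => i j; rewrite summxE mxE.
  transitivity ((beta (tmx T) (delta_mx 0 i) (delta_mx 0 j) *m d) 0 c); last first.
    by rewrite hd mxE.
  rewrite [RHS]mxE; apply: eq_bigr => k0 _.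
  by rewrite [X in _ = X * _]mxE e_entry mxE mulrC.
have hr : r *m (\matrix_(i < tp T) mxvec (tmx T i)) = 0 *m (\matrix_(i < tp T) mxvec (tmx T i)).
  rewrite mul0mx mulmx_sum_row.
  have -> : \sum_i r 0 i *: row i (\matrix_(i < tp T) mxvec (tmx T i))
     = mxvec (\sum_k0 d k0 c *: tmx T k0).
    rewrite linear_sum; apply: eq_bigr => i _; rewrite linearZ /= rowK mxE //.
  by rewrite hS linear0.
have := row_free_inj hfree hr; move/(congr1 (fun M : 'rV[R]_(tp T) => M 0 k)); rewrite !mxE.
by [].
Qed.

End S.


Section S2.
Variable R : realFieldType.

Definition crit q p (C : 'I_p -> 'M[R]_q) :=
  exists a : 'M[R]_q, [/\ a *m a = a, a != 0, a != 1%:M &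
    exists d : 'M[R]_p, forall x y, beta C x (y *m a) = beta C x y *m d].

Lemma lsub_mulP q p (a : 'M[R]_q) (d : 'M[R]_p) (z : 'rV[R]_(q + p)) :
  lsubmx (z *m block_mx a 0 0 d) = lsubmx z *m a.
Proof. by rewrite -{1}(hsubmxK z) mul_row_block row_mxKl mulmx0 addr0. Qed.

Lemma sub_idem_0 n (P : 'M[R]_n) (u : 'rV[R]_n) : P *m P = P ->
  (u <= P)%MS -> (u <= 1%:M - P)%MS -> u = 0.
Proof.
move=> PP /submxP [D1 ->] /submxP [D2 e].
have h1 : D1 *m P *m P = D1 *m P by rewrite -mulmxA PP.
have h2 : D1 *m P *m P = 0.
  by rewrite e -mulmxA mulmxBl mul1mx PP subrr mulmx0.
by rewrite -h1 h2.
Qed.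

Lemma crit_decomp q p (C : 'I_p -> 'M[R]_q) : spans C -> crit C -> decomposable C.
Proof.
move=> hs [a [aa a0 a1 [d hd]]].
have dd : d *m d = d.
  apply/eqP; rewrite -subr_eq0; apply/eqP; apply: hs => x y.
  by rewrite mulmxBr mulmxA -!hd -mulmxA aa subrr.
pose P : 'M[R]_(q + p) := block_mx a 0 0 d.
have PP : P *m P = P.
  by rewrite /P mulmx_block !mulmx0 !mul0mx !addr0 !add0r aa dd.
have key : forall x z, lie_br C x (z *m P) = lie_br C x z *m P.
  move=> x z; rewrite !lie_brE lsub_mulP hd /P mul_row_block !mul0mx !mulmx0.
  by rewrite !add0r.
exists P, (1%:M - P); split.
- split.
  + by move=> x y /submxP [D ->]; rewrite key submxMl.
  + move=> x y /submxP [D ->].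
    by rewrite mulmxBr mulmx1 lie_brB key -{1}(mulmx1 (lie_br C x D)) -mulmxBr submxMl.
- by apply: contra a0 => /eqP P0; rewrite -(block_mxKul a 0 0 d) -/P P0 -(@block_mxKul _ q p q p 0 0 0 0) block_mx0.
- apply: contra a1; rewrite subr_eq0 => /eqP P1.
  by rewrite -(block_mxKul a 0 0 d) -/P -P1 (scalar_mx_block q p) block_mxKul.
- apply/eqmx0P; apply/eqP; rewrite -submx0; apply/row_subP => i.
  have := row_sub i (P :&: (1%:M - P))%MS; rewrite sub_capmx => /andP [h1 h2].
  by rewrite (sub_idem_0 PP h1 h2) sub0mx.
- apply/andP; split; first exact: submx1.
  have e : (P + (1%:M - P) : 'M_(q + p)) = 1%:M by rewrite addrC subrK.
  by rewrite -[X in (X <= _)%MS]e addmx_sub_adds.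
Qed.

End S2.


Section S3.
Variable R : realFieldType.

Lemma decomp_crit q p (C : 'I_p -> 'M[R]_q) : spans C -> decomposable C -> crit C.
Proof.
move=> hs [I [J [[hI hJ] I0 J0 hcap hsum]]].
have capE : (I :&: J)%MS = 0 by apply/eqmx0P.
have full : forall u : 'rV[R]_(q + p), (u <= I + J)%MS.
  by move=> u; apply: submx_trans (submx1 u) _; case/andP: hsum.
pose P := proj_mx I J.
have Pid : forall u : 'rV[R]_(q + p), u *m P *m P = u *m P.
  by move=> u; rewrite (proj_mx_id capE) // proj_mx_sub.
have comm : forall x y, lie_br C x (y *m P) = lie_br C x y *m P.
  move=> x y.
  have hJy : (y - y *m P <= J)%MS by apply: proj_mx_compl_sub.
  have e : lie_br C x y = lie_br C x (y *m P) + lie_br C x (y - y *m P).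
    by rewrite lie_brB addrC subrK.
  rewrite [in RHS]e mulmxDl (proj_mx_0 capE (hJ _ _ hJy)) addr0.
  by rewrite (proj_mx_id capE (hI x _ (proj_mx_sub I J y))).
have PP : P *m P = P.
  by apply/row_matrixP => i; rewrite !rowE mulmxA Pid.
set a := ulsubmx P; set b := ursubmx P; set c := dlsubmx P; set d := drsubmx P.
have Pb : P = block_mx a b c d by rewrite submxK.
have rel : forall (x1 y1 : 'rV[R]_q) (y2 : 'rV[R]_p),
    0 = beta C x1 y1 *m c /\ beta C x1 (y1 *m a + y2 *m c) = beta C x1 y1 *m d.
  move=> x1 y1 y2; have := comm (row_mx x1 0) (row_mx y1 y2).
  rewrite !lie_brE Pb mul_row_block !row_mxKl mul_row_block !mul0mx !add0r.
  by move/eq_row_mx.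
have c0 : c = 0 by apply: hs => x y; have [] := rel x y 0.
have hd : forall x y, beta C x (y *m a) = beta C x y *m d.
  by move=> x y; have [_] := rel x y 0; rewrite c0 mulmx0 addr0.
rewrite c0 in Pb.
have := PP; rewrite Pb mulmx_block !mulmx0 !mul0mx !addr0 add0r.
case/eq_block_mx => aa hb _ dd.
exists a; split => //; last by exists d.
- apply/negP => /eqP a0; case/negP: I0; apply/eqP.
  have d0 : d = 0 by apply: hs => x y; rewrite -hd a0 mulmx0 beta0r.
  move: hb; rewrite a0 d0 mul0mx mulmx0 addr0 => b0.
  apply/row_matrixP => i; rewrite row0.
  by rewrite -(proj_mx_id capE (row_sub i I)) -/P Pb a0 -b0 d0 block_mx0 mulmx0.
- apply/negP => /eqP a1; case/negP: J0; apply/eqP.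
  have d1 : d = 1%:M.
    apply/eqP; rewrite eq_sym -subr_eq0; apply/eqP; apply: hs => x y.
    by rewrite mulmxBr mulmx1 -hd a1 mulmx1 subrr.
  move: hb; rewrite a1 d1 mul1mx mulmx1 => /eqP; rewrite -{3}[b]add0r => /eqP/addIr b0.
  apply/row_matrixP => i; rewrite row0.
  have := proj_mx_0 capE (row_sub i J); rewrite -/P Pb a1 b0 d1 -scalar_mx_block.
  by rewrite mulmx1.
Qed.

End S3.


Section S4.
Variable R : realFieldType.

Lemma betaZmx q p (C : 'I_p -> 'M[R]_q) x (s : 'M[R]_1) u :
  beta C x (s *m u) = s 0 0 *: beta C x u.
Proof. by rewrite {1}(mx11_scalar s) mul_scalar_mx betaZr. Qed.

Lemma nokernel q p (C : 'I_p -> 'M[R]_q) : spans C -> (0 < p)%N ->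
  ~ decomposable C -> forall u, (forall x, beta C x u = 0) -> u = 0.
Proof.
move=> hs p0 nd u hu; apply/eqP; apply/negPn/negP => /matrix0Pn [i0 [i hi]].
rewrite (ord1 i0) in hi.
pose w : 'rV[R]_q := (u 0 i)^-1 *: delta_mx 0 i.
have uw : u *m w^T = 1%:M.
  apply/matrixP => k l; rewrite (ord1 k) (ord1 l) !mxE.
  rewrite (bigD1 i) //= big1 ?addr0.
    by rewrite !mxE !eqxx mulr1 mulfV.
  by move=> j /negPf hj; rewrite !mxE hj andbF mulr0 mulr0.
pose a := w^T *m u.
have ua : u *m a = u by rewrite /a mulmxA uw mul1mx.
apply: nd; apply: crit_decomp => //; exists a; split.
- by rewrite /a mulmxA -(mulmxA w^T) uw mulmx1.
- apply/eqP => a0; move/eqP: hi; apply; have := ua; rewrite a0 mulmx0 => <-; by rewrite mxE.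
- apply/eqP => a1.
  have : (1%:M : 'M[R]_p) = 0.
    apply: hs => x y; rewrite mulmx1.
    by rewrite -(mulmx1 y) -a1 /a mulmxA betaZmx hu scaler0.
  move/matrixP/(_ (Ordinal p0) (Ordinal p0)); rewrite !mxE eqxx /=.
  by move/eqP; rewrite oner_eq0.
- exists 0 => x y; rewrite mulmx0 /a mulmxA betaZmx hu scaler0 //.
Qed.

End S4.


Section S5.
Variable R : realFieldType.

Definition selmx m p (f : 'I_m -> nat) : 'M[R]_(m, p) :=
  \matrix_(i, k) ((k : nat) == f i)%:R.

Lemma selmx_tr m p (f : 'I_m -> nat) : injective f -> (forall i, (f i < p)%N) ->
  selmx p f *m (selmx p f)^T = 1%:M.
Proof.
move=> finj fb; apply/matrixP => i i'; rewrite !mxE.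
rewrite (bigD1 (Ordinal (fb i))) //= big1 ?addr0.
  rewrite !mxE /= eqxx mul1r; rewrite eq_sym (inj_eq finj).
  by rewrite eq_sym.
move=> k /negPf hk; rewrite !mxE.
have -> : ((k : nat) == f i) = false.
  by apply/negbTE; apply: contraFN hk => /eqP e; apply/eqP/val_inj.
by rewrite mul0r.
Qed.

Lemma selmxE m p (f : 'I_m -> nat) i k : selmx p f i k = ((k : nat) == f i)%:R.
Proof. by rewrite mxE. Qed.

Lemma betaE q p (C : 'I_p -> 'M[R]_q) u v k :
  beta C u v 0 k = (u *m C k *m v^T) 0 0.
Proof. by rewrite mxE. Qed.

Lemma bil_sum q m (x y : 'rV[R]_q) (c : 'I_m -> R) (M : 'I_m -> 'M[R]_q) :
  (x *m (\sum_i c i *: M i) *m y^T) 0 0 = \sum_i c i * (x *m M i *m y^T) 0 0.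
Proof.
rewrite mulmx_sumr mulmx_suml summxE; apply: eq_bigr => i _.
by rewrite -scalemxAr -scalemxAl mxE.
Qed.

Lemma beta_glue q1 q2 p p1 p2 (C : 'I_p -> 'M[R]_(q1 + q2))
  (T : 'I_p1 -> 'M[R]_q1) (D : 'I_p2 -> 'M[R]_q2) (f1 : 'I_p1 -> nat) (f2 : 'I_p2 -> nat) :
  (forall k : 'I_p, C k = block_mx (\sum_i ((k : nat) == f1 i)%:R *: T i) 0 0
                                   (\sum_i ((k : nat) == f2 i)%:R *: D i)) ->
  forall x1 x2 y1 y2,
  beta C (row_mx x1 x2) (row_mx y1 y2) =
  beta T x1 y1 *m selmx p f1 + beta D x2 y2 *m selmx p f2.
Proof.
move=> hC x1 x2 y1 y2; apply/rowP => k.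
rewrite betaE hC tr_row_mx mul_row_block !mulmx0 addr0 add0r mul_row_col.
rewrite [LHS]mxE !bil_sum [RHS]mxE !mxE; congr (_ + _); apply: eq_bigr => i _.
  by rewrite betaE selmxE mulrC.
by rewrite betaE selmxE mulrC.
Qed.

End S5.
Arguments selmx {R m} p f.


Section S6.
Variable R : realFieldType.

Lemma row_selmx m p (f : 'I_m -> nat) i (k : 'I_p) : f i = k ->
  row i (selmx p f) = delta_mx 0 k :> 'rV[R]_p.
Proof. by move=> hi; apply/rowP => k'; rewrite !mxE hi. Qed.

Lemma glue_spans q1 q2 p p1 p2 (C : 'I_p -> 'M[R]_(q1 + q2))
  (T : 'I_p1 -> 'M[R]_q1) (D : 'I_p2 -> 'M[R]_q2) (f1 : 'I_p1 -> nat) (f2 : 'I_p2 -> nat) :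
  (forall k : 'I_p, C k = block_mx (\sum_i ((k : nat) == f1 i)%:R *: T i) 0 0
                                   (\sum_i ((k : nat) == f2 i)%:R *: D i)) ->
  (forall k : 'I_p, (exists i, f1 i = k) \/ (exists i, f2 i = k)) ->
  spans T -> spans D -> spans C.
Proof.
move=> hC cov hT hD m d hd.
have h1 : selmx p f1 *m d = 0.
  apply: hT => x y; have := hd (row_mx x 0) (row_mx y 0).
  by rewrite (beta_glue hC) beta0l mul0mx addr0 mulmxA.
have h2 : selmx p f2 *m d = 0.
  apply: hD => x y; have := hd (row_mx 0 x) (row_mx 0 y).
  by rewrite (beta_glue hC) beta0l mul0mx add0r mulmxA.
apply/row_matrixP => k; rewrite row0 rowE.
case: (cov k) => [[i hi]|[i hi]].
  by rewrite -(row_selmx hi) -row_mul h1 row0.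
by rewrite -(row_selmx hi) -row_mul h2 row0.
Qed.

End S6.


Section S7.
Variable R : realFieldType.

Lemma canE m p n (E : 'M[R]_(m, p)) (X Y : 'M[R]_(n, m)) :
  E *m E^T = 1%:M -> X *m E = Y *m E -> X = Y.
Proof. by move=> EE h; rewrite -(mulmx1 X) -(mulmx1 Y) -EE !mulmxA h. Qed.

Lemma row_nz m p (E : 'M[R]_(m, p)) i : E *m E^T = 1%:M -> row i E != 0.
Proof.
move=> EE; apply/eqP => z.
have : row i (E *m E^T) = 0 by rewrite row_mul z mul0mx.
rewrite EE => /rowP /(_ i); rewrite !mxE eqxx /= => /eqP; by rewrite oner_eq0.
Qed.

Lemma glue q1 q2 p p1 p2 (C : 'I_p -> 'M[R]_(q1 + q2))
  (T : 'I_p1 -> 'M[R]_q1) (D : 'I_p2 -> 'M[R]_q2) (f1 : 'I_p1 -> nat) (f2 : 'I_p2 -> nat) :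
  (forall k : 'I_p, C k = block_mx (\sum_i ((k : nat) == f1 i)%:R *: T i) 0 0
                                   (\sum_i ((k : nat) == f2 i)%:R *: D i)) ->
  injective f1 -> injective f2 -> (forall i, (f1 i < p)%N) -> (forall i, (f2 i < p)%N) ->
  (exists i1 i2, f1 i1 = f2 i2) ->
  spans C -> spans T -> spans D -> (0 < p1)%N -> (0 < p2)%N ->
  ~ decomposable T -> ~ decomposable D -> ~ decomposable C.
Proof.
move=> hC f1i f2i f1b f2b [i1 [i2 hsh]] hsC hT hD p1p p2p nT nD dC.
have [a [aa a0 a1 [d hd]]] := decomp_crit hsC dC.
have EE1 := selmx_tr R f1i f1b; have EE2 := selmx_tr R f2i f2b.
set E1 := selmx p f1 in EE1; set E2 := selmx p f2 in EE2.
have hB := beta_glue hC; rewrite -/E1 -/E2 in hB.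
set a11 := ulsubmx a; set a12 := ursubmx a; set a21 := dlsubmx a; set a22 := drsubmx a.
have ab : a = block_mx a11 a12 a21 a22 by rewrite submxK.
have rel : forall x1 x2 y1 y2,
  beta T x1 (y1 *m a11 + y2 *m a21) *m E1 + beta D x2 (y1 *m a12 + y2 *m a22) *m E2
  = (beta T x1 y1 *m E1 + beta D x2 y2 *m E2) *m d.
  move=> x1 x2 y1 y2; have := hd (row_mx x1 x2) (row_mx y1 y2).
  by rewrite {1}ab mul_row_block !hB.
have a21_0 : a21 = 0.
  apply/row_matrixP => i; rewrite row0 rowE.
  apply: (nokernel hT p1p nT) => x1; apply: (canE EE1).
  have := rel x1 0 0 (delta_mx 0 i).
  by rewrite !(mul0mx, add0r, addr0, beta0l, beta0r).
have a12_0 : a12 = 0.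
  apply/row_matrixP => i; rewrite row0 rowE.
  apply: (nokernel hD p2p nD) => x2; apply: (canE EE2).
  have := rel 0 x2 (delta_mx 0 i) 0.
  by rewrite !(mul0mx, add0r, addr0, beta0l, beta0r).
have hTa : forall x1 y1, beta T x1 (y1 *m a11) = beta T x1 y1 *m (E1 *m d *m E1^T).
  move=> x1 y1; have := rel x1 0 y1 0.
  rewrite a21_0 a12_0 !(mul0mx, mulmx0, add0r, addr0, beta0l, beta0r) => h.
  by rewrite -[LHS]mulmx1 -EE1 mulmxA h !mulmxA.
have hDa : forall x2 y2, beta D x2 (y2 *m a22) = beta D x2 y2 *m (E2 *m d *m E2^T).
  move=> x2 y2; have := rel 0 x2 0 y2.
  rewrite a21_0 a12_0 !(mul0mx, mulmx0, add0r, addr0, beta0l, beta0r) => h.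
  by rewrite -[LHS]mulmx1 -EE2 mulmxA h !mulmxA.
have := aa; rewrite {1 2 3}ab a12_0 a21_0 mulmx_block !mulmx0 !mul0mx !addr0 !add0r.
case/eq_block_mx => aa11 _ _ aa22.
have c11 : a11 = 0 \/ a11 = 1%:M.
  case: (eqVneq a11 0) => [->|n0]; first by left.
  case: (eqVneq a11 1%:M) => [->|n1]; first by right.
  exfalso; apply: nT; apply: crit_decomp => //; exists a11; split => //.
  by exists (E1 *m d *m E1^T).
have c22 : a22 = 0 \/ a22 = 1%:M.
  case: (eqVneq a22 0) => [->|n0]; first by left.
  case: (eqVneq a22 1%:M) => [->|n1]; first by right.
  exfalso; apply: nD; apply: crit_decomp => //; exists a22; split => //.
  by exists (E2 *m d *m E2^T).
have e11 : a11 = 1%:M -> E1 *m d = E1.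
  move=> h1; apply/eqP; rewrite -subr_eq0; apply/eqP; apply: hT => x y.
  have := rel x 0 y 0; rewrite a21_0 a12_0 h1.
  rewrite !(mul0mx, mulmx0, mulmx1, add0r, addr0, beta0l, beta0r) => h.
  by rewrite mulmxBr mulmxA -h subrr.
have e10 : a11 = 0 -> E1 *m d = 0.
  move=> h0; apply: hT => x y.
  have := rel x 0 y 0; rewrite a21_0 a12_0 h0.
  rewrite !(mul0mx, mulmx0, mulmx1, add0r, addr0, beta0l, beta0r) => h.
  by rewrite mulmxA -h.
have e21 : a22 = 1%:M -> E2 *m d = E2.
  move=> h1; apply/eqP; rewrite -subr_eq0; apply/eqP; apply: hD => x y.
  have := rel 0 x 0 y; rewrite a21_0 a12_0 h1.
  rewrite !(mul0mx, mulmx0, mulmx1, add0r, addr0, beta0l, beta0r) => h.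
  by rewrite mulmxBr mulmxA -h subrr.
have e20 : a22 = 0 -> E2 *m d = 0.
  move=> h0; apply: hD => x y.
  have := rel 0 x 0 y; rewrite a21_0 a12_0 h0.
  rewrite !(mul0mx, mulmx0, mulmx1, add0r, addr0, beta0l, beta0r) => h.
  by rewrite mulmxA -h.
have rsh : row i1 E1 = row i2 E2 by apply/rowP => k; rewrite !mxE hsh.
case: c11 => h11; case: c22 => h22.
- by move/eqP: a0; apply; rewrite ab h11 h22 a12_0 a21_0 block_mx0.
- move/eqP: (row_nz i2 EE2); apply.
  by rewrite -(e21 h22) row_mul -rsh -row_mul e10 // row0.
- move/eqP: (row_nz i1 EE1); apply.
  by rewrite -(e11 h11) row_mul rsh -row_mul e20 // row0.
- by move/eqP: a1; apply; rewrite ab h11 h22 a12_0 a21_0 -scalar_mx_block.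
Qed.

End S7.


Ltac natlia := intros; cbv beta in *; repeat match goal with
  | H : is_true (_ <= _)%N |- _ => move/ssrnat.leP: H => H; rewrite -?minusE -?plusE in H
  | H : is_true (_ < _)%N |- _ => move/ssrnat.ltP: H => H; rewrite -?minusE -?plusE in H
  | H : is_true (_ == _)%N |- _ => move/eqP: H => H; rewrite -?minusE -?plusE in H
  | H : is_true (~~ (_ == _))%N |- _ => move/eqP: H => H; rewrite -?minusE -?plusE in H
  | H : (_ = _ :> nat) |- _ => progress (rewrite -?minusE -?plusE in H)
  | H : ~ (_ = _ :> nat) |- _ => progress (rewrite -?minusE -?plusE in H)
  | |- is_true (_ <= _)%N => apply/ssrnat.leP
  | |- is_true (_ < _)%N => apply/ssrnat.ltP
  | |- is_true (_ == _)%N => apply/eqP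
  | |- _ => progress (rewrite -?minusE -?plusE)
  end; lia.

Lemma L3 (a b k : nat) : (a <= k)%N -> (k < (a + b).-1)%N -> (k.+1 - a < b)%N.
Proof. natlia. Qed.

Lemma L2 (a b i : nat) : i <> 0%N -> (i < b)%N -> ((a + i).-1 < (a + b).-1)%N.
Proof. natlia. Qed.

Lemma L6 (a i k : nat) : i <> 0%N -> (k < a)%N -> (a + i).-1 <> k.
Proof. natlia. Qed.

Lemma L7 (a k j : nat) : (a <= k)%N ->
  (if (k.+1 - a == 0)%N then j else (a + (k.+1 - a)).-1) = k.
Proof.
move=> hk; rewrite subn_eq0 leqNgt ltnS hk /= subnKC //; exact: leqW.
Qed.

Section S8.
Variable R : realFieldType.

Lemma sum_hit m n (f : 'I_m -> nat) (X : 'I_m -> 'M[R]_n) (k : nat) i0 :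
  injective f -> f i0 = k -> \sum_i ((k == f i)%:R *: X i) = X i0.
Proof.
move=> fi h; rewrite (bigD1 i0) //= h eqxx scale1r big1 ?addr0 // => i hi.
have -> : (k == f i) = false.
  by apply/negbTE; apply: contra hi; rewrite -h => /eqP/fi ->.
by rewrite scale0r.
Qed.

Lemma sum_miss m n (f : 'I_m -> nat) (X : 'I_m -> 'M[R]_n) (k : nat) :
  (forall i, f i != k) -> \sum_i ((k == f i)%:R *: X i) = 0.
Proof. by move=> h; rewrite big1 // => i _; rewrite eq_sym (negPf (h i)) scale0r. Qed.

Lemma tgetE (T : tup R) k (hk : (k < tp T)%N) : tget T k = tmx T (Ordinal hk).
Proof. by rewrite /tget insubT. Qed.

Definition Inv (T : tup R) := [/\ (0 < tp T)%N, spans (tmx T) & ~ decomposable (tmx T)].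

Lemma attach_inv j (T D : tup R) : (j < tp T)%N -> Inv T -> Inv D -> Inv (attach_at j T D).
Proof.
move=> hj [pT sT nT] [pD sD nD].
pose f1 := fun i : 'I_(tp T) => (i : nat).
pose f2 := fun i : 'I_(tp D) => if (i : nat) == 0%N then j else (tp T + i).-1.
have f1i : injective f1 by move=> x y /val_inj.
have f2i : injective f2.
  move=> x y; rewrite /f2 => h; apply: ord_inj.
  move: h; case: (eqVneq (x : nat) 0%N) => hx; case: (eqVneq (y : nat) 0%N) => hy /=;
    move=> h; try natlia.
have f1b : forall i, (f1 i < (tp T + tp D).-1)%N.
  by move=> i; have := ltn_ord i; rewrite /f1; natlia.
have f2b : forall i, (f2 i < (tp T + tp D).-1)%N.
  move=> i; rewrite /f2; case: eqP => hi /=; first natlia.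
  exact: L2 hi (ltn_ord i).
have hC : forall k : 'I_(tp T + tp D).-1,
    tmx (attach_at j T D) k = block_mx (\sum_i ((k : nat) == f1 i)%:R *: tmx T i) 0 0
                                   (\sum_i ((k : nat) == f2 i)%:R *: tmx D i).
  move=> k /=; congr block_mx.
    case: (ltnP k (tp T)) => hk.
      by rewrite (tgetE hk) (@sum_hit _ _ _ _ _ (Ordinal hk) f1i (erefl _)).
    by rewrite sum_miss // => i; rewrite /f1; apply/eqP; have := ltn_ord i; natlia.
  case: (eqVneq (k : nat) j) => hkj.
    by rewrite (tgetE pD) (@sum_hit _ _ _ _ _ (Ordinal pD) f2i).
  case: (leqP (tp T) k) => hk.
    have hb : (k.+1 - tp T < tp D)%N by apply: L3 hk (ltn_ord k).
    rewrite (tgetE hb) (@sum_hit _ _ _ _ _ (Ordinal hb) f2i) //.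
    exact: L7.
  rewrite sum_miss // => i; rewrite /f2; case: (eqVneq (i : nat) 0%N) => h /=.
    by rewrite eq_sym.
  by apply/eqP; apply: L6 hk; apply/eqP.
have sC : spans (tmx (attach_at j T D)).
  apply: (glue_spans hC) => //.
  move=> k; case: (ltnP k (tp T)) => hk.
    by left; exists (Ordinal hk).
  have hb : (k.+1 - tp T < tp D)%N by apply: L3 hk (ltn_ord k).
  right; exists (Ordinal hb); exact: L7.
split => //.
- by rewrite /=; natlia.
- apply: (glue hC f1i f2i f1b f2b) => //.
  by exists (Ordinal hj), (Ordinal pD).
Qed.

End S8.


Lemma adjoin_attach (R : realFieldType) (A B : tup R) : (0 < tp A)%N ->
  adjoin A B = attach_at (tp A).-1 A B.
Proof.
move=> hA; rewrite /adjoin /attach_at; congr Tup.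
apply: functional_extensionality => k /=; congr block_mx.
case: (eqVneq (k : nat) (tp A).-1) => h.
  by rewrite h prednK // leqnn subnn.
rewrite leq_eqVlt ltnS.
have -> : (tp A == k.+1) = false.
  by apply/negbTE; apply: contra h => /eqP e; apply/eqP; rewrite (congr1 predn e).
by [].
Qed.

Lemma L8 (j a b : nat) : (j < a)%N -> (0 < b)%N -> (j < (a + b).-1)%N.
Proof. natlia. Qed.

Theorem mainTheorem11 (R : realFieldType) (A1 : tup R) (As : seq (tup R)) :
  (forall T, List.In T (A1 :: As) ->
     [/\ (0 < tp T)%N, skew_tup T, linindep_tup T & indecomposable_tup T]) ->
  indecomposable_tup (foldl (@adjoin R) A1 As) /\
  indecomposable_tup (multi_adjoin A1 As).
Proof.
move=> H.
have inv : forall T, List.In T (A1 :: As) -> Inv T.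
  by move=> T /H [p0 _ li nd]; split => //; exact: linindep_spans.
have invA1 : Inv A1 by apply: inv; left.
have invAs : forall T, List.In T As -> Inv T by move=> T hT; apply: inv; right.
split.
- suff: Inv (foldl (@adjoin R) A1 As) by case.
  elim: As invAs A1 invA1 {H inv} => [|D As IH] hAs A invA //=.
  apply: IH; first by move=> T hT; apply: hAs; right.
  have [pA _ _] := invA.
  rewrite adjoin_attach //; apply: attach_inv => //; last by apply: hAs; left.
  by rewrite ltn_predL.
- rewrite /multi_adjoin.
  have [pA1 _ _] := invA1.
  have : ((tp A1).-1 < tp A1)%N by rewrite ltn_predL.
  suff: forall T, ((tp A1).-1 < tp T)%N -> Inv T -> Inv (foldl (attach_at (tp A1).-1) T As).
    by move=> h hj; case: (h A1 hj invA1).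
  elim: As invAs {H inv} => [|D As IH] hAs T hj hT //=.
  have [pD _ _] : Inv D by apply: hAs; left.
  apply: IH; first by move=> T' hT'; apply: hAs; right.
    by rewrite /=; apply: L8.
  by apply: attach_inv => //; apply: hAs; left.
Qed.
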